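(* Let $D$ be a finite digraph and let $\mathcal{S}=\{S_1,\dots,S_t\}$ be a greedy dicoloring of $D$. Then there exists a good path partition of $D$ with respect to $\mathcal{S}$.
   Context: A greedy dicoloring of $D$ is a partition $\mathcal{S}=\{S_1,\dots,S_t\}$ of $V(D)$ such that $S_1$ is a maximum-size vertex set inducing an acyclic subdigraph of $D$, and for each $i\in\{2,\dots,t\}$, $S_i$ is a maximum-size vertex set inducing an acyclic subdigraph of $D-\bigcup_{j=1}^{i-1}S_j$. A path partition of $D$ is a collection of vertex-disjoint directed paths covering $V(D)$. A good path partition with respect to $\mathcal{S}$ is a path partition $\mathcal{P}$ of $D$ such that for every path $(v_1,\dots,v_\ell)\in\mathcal{P}$ and every $i\in\{1,\dots,\ell\}$, $v_i\in S_i$. *)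

(* Defs.v *)
From mathcomp Require Import all_boot.
Set Implicit Arguments. Unset Strict Implicit. Unset Printing Implicit Defensive.

Section Digraph.
Variables (T : finType) (e : rel T).

Definition is_dicycle (c : seq T) : bool :=
  [&& c != [::], uniq c & cycle e c].

Definition acyclic_set (A : {set T}) : Prop :=
  forall c : seq T, is_dicycle c -> ~ {subset c <= A}.

Definition remaining (S : seq {set T}) (i : nat) : {set T} :=
  ~: \bigcup_(j < i) nth set0 S j.

(* Greedy dicoloring S = [:: S_1; ...; S_t] (0-indexed here): a partition of
   V(D) into nonempty parts such that each S_i is a maximum-size acyclic set of
   D - (S_1 u ... u S_{i-1}). *)
Definition greedy_dicoloring (S : seq {set T}) : Prop :=
  (forall i, i < size S ->
     [/\ nth set0 S i != set0,
         nth set0 S i \subset remaining S i,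
         acyclic_set (nth set0 S i)
       & forall A : {set T}, A \subset remaining S i -> acyclic_set A ->
           #|A| <= #|nth set0 S i| ]) /\
  (forall v : T, exists2 i, i < size S & v \in nth set0 S i).

Definition is_dipath (p : seq T) : bool :=
  if p is x :: q then path e x q && uniq p else false.

Definition path_partition (P : seq (seq T)) : Prop :=
  [/\ all is_dipath P, uniq (flatten P) & forall v : T, v \in flatten P].

(* Good path partition w.r.t. S: the i-th vertex of every path lies in S_i
   (0-indexed; nth with default set0 forces size p <= size S). *)
Definition good_path_partition (S : seq {set T}) (P : seq (seq T)) : Prop :=
  path_partition P /\
  (forall p, p \in P -> forall (x0 : T) (i : nat), i < size p ->
     nth x0 p i \in nth set0 S i).

End Digraph.

(* Main.v *)
Require Import Defs.
From mathcomp Require Import all_boot zify.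
Set Implicit Arguments. Unset Strict Implicit. Unset Printing Implicit Defensive.

Section Hall.
Variables (A B : finType) (r : A -> B -> bool) (b0 : B).
Definition Nb (Bs : {set B}) (Y : {set A}) := [set b in Bs | [exists a in Y, r a b]].

Lemma hall n : forall (X : {set A}) (Bs : {set B}), #|X| <= n ->
  (forall Y : {set A}, Y \subset X -> #|Y| <= #|Nb Bs Y|) ->
  exists f : A -> B, [/\ {in X &, injective f}, {in X, forall a, f a \in Bs}
                       & {in X, forall a, r a (f a)}].
Proof.
elim: n => [|n IH] X Bs hX hH.
  have X0 : X = set0 by apply/cards0_eq; lia.
  by exists (fun _ => b0); rewrite X0; split => ?; rewrite inE.
case: (set_0Vmem X) => [X0 | [a aX]].
  by exists (fun _ => b0); rewrite X0; split => ?; rewrite inE.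
case: (boolP [exists Y : {set A}, [&& Y \subset X, Y != set0, Y != X & #|Nb Bs Y| <= #|Y|]]).
  move/existsP => [Y /and4P [YX Y0 YXn tight]].
  have hYlt : #|Y| < #|X| by apply: proper_card; rewrite properEneq YXn YX.
  have [f1 [i1 b1 r1]] : exists f : A -> B, [/\ {in Y &, injective f}, {in Y, forall a, f a \in Bs}
                       & {in Y, forall a, r a (f a)}].
    apply: IH; first lia.
    by move=> Z ZY; apply: hH; apply: subset_trans ZY YX.
  have [f2 [i2 b2 r2]] : exists f : A -> B, [/\ {in X :\: Y &, injective f},
        {in X :\: Y, forall a, f a \in Bs :\: Nb Bs Y}
                       & {in X :\: Y, forall a, r a (f a)}].
    apply: IH.
      rewrite cardsD (setIidPr YX).
      have : 0 < #|Y| by rewrite card_gt0.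
      lia.
    move=> Z ZXY.
    have ZX : Z \subset X by apply: subset_trans ZXY (subsetDl _ _).
    have := hH (Z :|: Y); rewrite subUset ZX YX => /(_ isT).
    have ZYd : Z :&: Y = set0.
      apply/setP => x; rewrite !inE; apply/negP => /andP [xZ xY].
      by have := subsetP ZXY x xZ; rewrite inE xY.
    rewrite cardsU ZYd cards0.
    have sub : Nb Bs (Z :|: Y) \subset Nb (Bs :\: Nb Bs Y) Z :|: Nb Bs Y.
      apply/subsetP => b; rewrite !inE => /andP [bB /existsP [x /andP [xZY rxb]]].
      rewrite bB /=; case bN : [exists a0 in Y, r a0 b]; rewrite ?orbT // orbF /=.
      move: xZY; rewrite inE => /orP [xZ|xY]; first by apply/existsP; exists x; rewrite xZ.
      by move/negbT: bN => /existsPn /(_ x); rewrite xY rxb.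
    have := subset_leq_card sub; rewrite cardsU.
    lia.
  exists (fun x => if x \in Y then f1 x else f2 x); split.
  - move=> x y xX yX /=.
    case xY: (x \in Y); case yY: (y \in Y) => h.
    + by apply: i1.
    + have := b2 y; rewrite inE yY yX => /(_ isT).
      rewrite -h inE => /andP [/negP []].
      by rewrite inE b1 //=; apply/existsP; exists x; rewrite xY r1.
    + have := b2 x; rewrite inE xY xX => /(_ isT).
      rewrite h inE => /andP [/negP []].
      by rewrite inE b1 //=; apply/existsP; exists y; rewrite yY r1.
    + by apply: i2 => //; rewrite inE ?xY ?yY.
  - move=> x xX /=; case xY: (x \in Y); first by apply: b1.
    by have := b2 x; rewrite inE xY xX inE => /(_ isT) /andP [].
  - move=> x xX /=; case xY: (x \in Y); first by apply: r1.
    by apply: r2; rewrite inE xY xX.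
rewrite negb_exists => /forallP nt.
have : #|[set a]| <= #|Nb Bs [set a]| by apply: hH; rewrite sub1set.
rewrite cards1 card_gt0 => /set0Pn [b].
rewrite inE => /andP [bB /existsP [a' /andP [/set1P -> rab]]].
have [f2 [i2 b2 r2]] : exists f : A -> B, [/\ {in X :\ a &, injective f},
        {in X :\ a, forall a, f a \in Bs :\ b}
                       & {in X :\ a, forall a, r a (f a)}].
  apply: IH.
    move: hX; rewrite (cardsD1 a X) aX; lia.
  move=> Z ZXa.
  case: (set_0Vmem Z) => [-> | [z zZ]]; first by rewrite cards0.
  have ZX : Z \subset X by apply: subset_trans ZXa (subsetDl _ _).
  have := nt Z; rewrite ZX /=.
  have -> : Z != set0 by apply/set0Pn; exists z.
  have -> /= : Z != X.
    apply/eqP => ZE; have := subsetP ZXa a; rewrite ZE aX => /(_ isT).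
    by rewrite !inE eqxx.
  rewrite -ltnNge => lt.
  have sub : Nb Bs Z :\ b \subset Nb (Bs :\ b) Z.
    by apply/subsetP => c; rewrite !inE => /andP [-> /andP [-> ->]].
  have := subset_leq_card sub.
  have := cardsD1 b (Nb Bs Z).
  lia.
exists (fun x => if x == a then b else f2 x); split.
- move=> x y xX yX /=.
  case: (eqVneq x a) => [->|xa]; case: (eqVneq y a) => [->|ya] //.
  + move=> h; have := b2 y; rewrite !inE ya yX -h eqxx; by move=> /(_ isT).
  + move=> h; have := b2 x; rewrite !inE xa xX h eqxx; by move=> /(_ isT).
  + by apply: i2; rewrite !inE ?xa ?ya ?xX ?yX.
- move=> x xX /=; case: (eqVneq x a) => [_|xa] //.
  by have := b2 x; rewrite !inE xa xX => /(_ isT) /andP [].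
- move=> x xX /=; case: (eqVneq x a) => [->|xa] //.
  by apply: r2; rewrite !inE xa xX.
Qed.
End Hall.

Section Main.
Variables (T : finType) (e : rel T) (S : seq {set T}).

Lemma remS i : remaining S i.+1 = remaining S i :\: nth set0 S i.
Proof. by rewrite /remaining big_ord_recr /= setCU setDE. Qed.

Lemma rem0 : remaining S 0 = setT.
Proof. by rewrite /remaining big_ord0 setC0. Qed.

Lemma acyc_sub (A B : {set T}) : A \subset B -> acyclic_set e B -> acyclic_set e A.
Proof.
move=> AB hB c hc sub; apply: (hB c hc) => x xc; exact: subsetP AB x (sub x xc).
Qed.

Lemma acyc0 : acyclic_set e set0.
Proof.
move=> [|x c] /andP [h _] sub //; by have := sub x (mem_head _ _); rewrite inE.
Qed.

Hypothesis G : greedy_dicoloring e S.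

Lemma remsize : remaining S (size S) = set0.
Proof.
apply/setP => v; rewrite /remaining !inE; apply/negbF.
case: G => _ /(_ v) [i hi vi].
by apply/bigcupP; exists (Ordinal hi).
Qed.

Lemma acyc_nth j : acyclic_set e (nth set0 S j).
Proof.
case: (ltnP j (size S)) => hj; first by case: G => /(_ j hj) [].
by rewrite nth_default //; apply: acyc0.
Qed.

Lemma sub_rem j : nth set0 S j \subset remaining S j.
Proof.
case: (ltnP j (size S)) => hj; first by case: G => /(_ j hj) [].
by rewrite nth_default // sub0set.
Qed.

Lemma path_closed (P Q : {set T}) y s :
  (forall u v, u \in Q -> v \in P -> e u v -> False) ->
  y \in Q -> path e y s -> all (mem (P :|: Q)) s -> all (mem Q) s.
Proof.
move=> noarc; elim: s y => [|z s IH] y //= yQ /andP [eyz pz] /andP [zPQ hs].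
have zQ : z \in Q.
  move: zPQ; rewrite inE => /orP [zP|] //; by case: (noarc _ _ yQ zP eyz).
by rewrite zQ (IH z).
Qed.

Lemma cycle_split (P Q : {set T}) c :
  (forall u v, u \in Q -> v \in P -> e u v -> False) ->
  cycle e c -> {subset c <= P :|: Q} -> {subset c <= P} \/ {subset c <= Q}.
Proof.
move=> noarc cc sub.
case: (boolP (has (mem Q) c)).
  move/hasP => [y yc yQ]; right.
  case: (rot_to yc) => i s' hs'.
  have : cycle e (rot i c) by rewrite rot_cycle.
  rewrite hs' /= rcons_path => /andP [ps _].
  have hall : all (mem (P :|: Q)) s'.
    apply/allP => x xs; apply: sub; by rewrite -(mem_rot i) hs' inE xs orbT.
  have := path_closed noarc yQ ps hall => /allP hq.
  move=> x; rewrite -(mem_rot i) hs' inE => /orP [/eqP ->|] //; exact: hq.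
move/hasPn => hn; left => x xc.
by have := sub x xc; rewrite inE => /orP [] // xQ; move/negP: (hn x xc).
Qed.

Definition good_from i (P : seq (seq T)) :=
  [/\ all (is_dipath e) P, uniq (flatten P),
      forall v, (v \in flatten P) = (v \in remaining S i)
    & forall p, p \in P -> forall x0 k, k < size p -> nth x0 p k \in nth set0 S (i + k)].

Lemma perm_ext (g : T -> T) x0 (Ps : seq (seq T)) :
  perm_eq (flatten [seq g (head x0 p) :: p | p <- Ps])
          ([seq g (head x0 p) | p <- Ps] ++ flatten Ps).
Proof.
elim: Ps => [|p Ps IH] //=.
rewrite perm_cons.
rewrite -(perm_cat2l p) in IH; apply: perm_trans IH _.
by rewrite perm_catCA.
Qed.

Lemma uniq_heads x0 (Ps : seq (seq T)) :
  uniq (flatten Ps) -> all (fun p => p != [::]) Ps -> uniq (map (head x0) Ps).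
Proof.
elim: Ps => [|p Ps IH] //=; rewrite cat_uniq => /and3P [up hn uf] /andP [pn an].
rewrite IH // andbT; apply/mapP => [[q qPs hq]].
case: p up pn hn hq => [|y p'] // _ _ hn /= hq.
case: q qPs hq => [|z q'] qPs /= hq.
  by move/allP: an => /(_ _ qPs).
move/hasPn: hn => /(_ z) h.
suff: z \in flatten Ps by move/h; rewrite /= -hq mem_head.
by apply/flattenP; exists (z :: q'); rewrite ?mem_head.
Qed.

Lemma step i P' : i < size S -> good_from i.+1 P' -> exists P, good_from i P.
Proof.
move=> hi [dP' uP' cP' nP'].
have [Sne Ssub Sac Smax] := G.1 i hi.
move: (Sne) => /set0Pn [x0 x0S].
set Si := nth set0 S i.
set hs := map (head x0) P'.
set H := [set x | x \in hs].
have nonemp : all (fun p => p != [::]) P'.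
  by apply/allP => p pP; move/allP: dP' => /(_ p pP); by case: p pP.
have hsS : forall x, x \in hs -> x \in nth set0 S i.+1.
  move=> x /mapP [p pP ->]; have := nP' p pP x0 0.
  case: p pP => [|y q] pP; first by move/allP: nonemp => /(_ _ pP).
  by rewrite addn0 /=; apply.
have notSi : forall v, v \in flatten P' -> v \notin Si.
  by move=> v; rewrite cP' remS inE => /andP [].
have HS1 : H \subset nth set0 S i.+1 by apply/subsetP => x; rewrite inE; exact: hsS.
have hallc : forall Y : {set T}, Y \subset H -> #|Y| <= #|Nb (fun a b => e b a) Si Y|.
  move=> Y YH; set N := Nb (fun a b => e b a) Si Y.
  rewrite leqNgt; apply/negP => lt.
  set A' := Y :|: (Si :\: N).
  have YS1 : Y \subset nth set0 S i.+1 := subset_trans YH HS1.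
  have YR : Y \subset remaining S i :\: Si by rewrite -remS; apply: subset_trans YS1 (sub_rem _).
  have A'R : A' \subset remaining S i.
    rewrite subUset; apply/andP; split; first by apply: subset_trans YR (subsetDl _ _).
    by apply: subset_trans (subsetDl _ _) Ssub.
  have dis : Y :&: (Si :\: N) = set0.
    apply/setP => x; rewrite !inE; apply/negP => /and3P [xY _ xS].
    by have := subsetP YR x xY; rewrite inE xS.
  have NS : N \subset Si by apply/subsetP => b; rewrite inE => /andP [].
  have cardA : #|A'| = #|Y| + (#|Si| - #|N|) by rewrite cardsU dis cards0 cardsD (setIidPr NS) subn0.
  suff acA : acyclic_set e A'.
    have := Smax A' A'R acA; have := subset_leq_card NS; rewrite -/Si cardA; lia.
  move=> c hc csub; case/and3P: (hc) => _ _ cc.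
  have noarc : forall u v, u \in Si :\: N -> v \in Y -> e u v -> False.
    move=> u v; rewrite inE => /andP [/negP uN uS] vY euv; apply: uN.
    by rewrite inE uS /=; apply/existsP; exists v; rewrite vY.
  have [cP|cQ] := cycle_split noarc cc csub.
    exact: (acyc_sub YS1 (@acyc_nth i.+1) hc cP).
  exact: (acyc_sub (subsetDl Si N) Sac hc cQ).
have [f [fi fS fr]] := @hall T T (fun a b => e b a) x0 #|H| H Si (leqnn _) hallc.
have hH : forall p, p \in P' -> head x0 p \in H by move=> p pP; rewrite inE; apply: map_f.
set M := [seq f (head x0 p) | p <- P'].
have memM : forall v, v \in M -> v \in Si /\ v \in f @: H.
  move=> v /mapP [p pP ->]; split; first exact: fS (hH p pP).
  by apply: imset_f; apply: hH.
have pe := perm_ext f x0 P'.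
exists ([seq f (head x0 p) :: p | p <- P'] ++ [seq [:: v] | v <- enum (Si :\: f @: H)]).
split.
- rewrite all_cat; apply/andP; split; apply/allP => p /mapP [q qP ->] //.
  case: q qP => [|y q] qP; first by move/allP: nonemp => /(_ _ qP).
  have := allP dP' _ qP; rewrite /= => /andP [pq uq].
  have hy : y \in H by apply: (hH _ qP).
  have nin : f y \notin y :: q.
    apply/negP => h; have : f y \in flatten P' by apply/flattenP; exists (y :: q).
    by move/notSi; rewrite fS.
  by rewrite fr //= pq nin.
- rewrite flatten_cat flatten_seq1 cat_uniq (perm_uniq pe) cat_uniq uP' enum_uniq andbT.
  apply/and3P; split => //; first (apply/andP; split).
  + rewrite (_ : [seq f (head x0 p) | p <- P'] = map f hs); last by rewrite /hs -map_comp.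
    rewrite (map_inj_in_uniq (f := f)).
      by apply: uniq_heads.
    by move=> x y xh yh; apply: fi; rewrite inE.
  + apply/hasPn => v vP; apply/negP => /memM [vS _].
    by move: (notSi v vP); rewrite vS.
  + apply/hasPn => v; rewrite mem_enum inE => /andP [vnf vS].
    rewrite (perm_mem pe) mem_cat; apply/negP => /orP [/memM [_ h] | h].
      by rewrite h in vnf.
    by move: (notSi v h); rewrite vS.
- move=> v; rewrite flatten_cat flatten_seq1 mem_cat (perm_mem pe) mem_cat mem_enum.
  rewrite cP' remS !in_setD.
  case vS: (v \in Si) => /=.
    rewrite (subsetP Ssub v vS).
    case: (boolP (v \in f @: H)) => [/imsetP [x xH ->] | h]; last by apply/orP; right; rewrite andbT.
    rewrite inE in xH; move/mapP: xH => [p pP ->].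
    by rewrite (map_f (fun p => f (head x0 p)) pP).
  case vM: (v \in M); last by rewrite /= andbF orbF.
  by case: (memM _ vM); rewrite -/Si vS.
- move=> p; rewrite mem_cat => /orP [/mapP [q qP ->] | /mapP [v vin ->]] x1 [|k] //=.
  + by rewrite addn0 => _; exact: (fS _ (hH q qP)).
  + by rewrite ltnS addnS -addSn => hk; exact: (nP' q qP x1 k hk).
  + by rewrite addn0 => _; move: vin; rewrite mem_enum inE => /andP [].
Qed.
End Main.

Theorem mainTheorem5 (T : finType) (e : rel T) (S : seq {set T}) :
  irreflexive e ->
  greedy_dicoloring e S ->
  exists P : seq (seq T), good_path_partition e S P.
Proof.
move=> irr G.
have H : forall k, k <= size S -> exists P, good_from e S (size S - k) P.
  elim => [|k IH] hk.
    exists [::]; split => //.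
    by move=> v; rewrite subn0 (remsize G) inE.
  have [P' gP'] := IH (ltnW hk).
  have hi : size S - k.+1 < size S by lia.
  have e1 : (size S - k.+1).+1 = size S - k by lia.
  rewrite -e1 in gP'.
  exact: (step G hi gP').
have [P [dP uP cP nP]] := H (size S) (leqnn _).
rewrite subnn in cP nP.
exists P; split; first split => //.
  by move=> v; rewrite cP rem0 inE.
move=> p pP x0 i hi; have := nP p pP x0 i hi; by rewrite add0n.
Qed.
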